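(* There is no even integer $f\ge 12$ and rational number $\delta/\pi$ with $\delta\in(\frac{7\pi}{15}-\frac{4\pi}{3f},\pi)$ such that the angles $\alpha=\beta=2\pi-2\delta$, $\gamma=\frac{2\pi}{5}$, $\epsilon=3\delta-\frac{7\pi}{5}+\frac{4\pi}{f}$ satisfy $$\big[(1-\cos\beta)\sin(\delta-\tfrac12\alpha)-(1-\cos\gamma)\sin(\epsilon-\tfrac12\alpha)\big]\sin\tfrac12(\delta-\epsilon)-\big[1-\cos(\beta-\gamma)\big]\sin\tfrac12\alpha\,\sin\tfrac12(\delta+\epsilon)=0.$$ Hence no $a^4b$-tiling by a rational pentagon has the vertices $\alpha\delta^2$, $\beta\delta^2$, $\gamma^5$.
   Context: The angles are those forced by the vertex equations $\alpha+2\delta=\beta+2\delta=5\gamma=2\pi$ and the angle sum $\alpha+\beta+\gamma+\delta+\epsilon=(3+\frac4f)\pi$. Labelling of an $a^4b$-pentagon: $\alpha$ opposite the $b$-edge, $\beta,\gamma$ adjacent to $\alpha$, $\delta,\epsilon$ the endpoints of the $b$-edge adjacent to $\beta,\gamma$ respectively. *)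

(* Defs.v *)
From Stdlib Require Export Reals QArith Qreals Arith.
Open Scope R_scope.

Definition a4b_lhs (alpha beta gamma delta epsilon : R) : R :=
  ((1 - cos beta) * sin (delta - alpha / 2)
     - (1 - cos gamma) * sin (epsilon - alpha / 2)) * sin ((delta - epsilon) / 2)
  - (1 - cos (beta - gamma)) * sin (alpha / 2) * sin ((delta + epsilon) / 2).

(* Main.v *)
Require Import Defs.
From Stdlib Require Import Reals QArith Qreals Arith.
From Stdlib Require Import ZArith Lia Lra.
Open Scope R_scope.

Local Open Scope Z_scope.
Definition P : Z := 32.
Definition Sc : Z := 2^P.
Definition fdn (x:Z) : Z := Z.shiftr x P.
Definition fup (x:Z) : Z := - Z.shiftr (- x) P.
Definition I := (Z*Z)%type.
Definition zmin (a b:Z) := if Z.leb a b then a else b.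
Definition zmax (a b:Z) := if Z.leb a b then b else a.
Definition iadd (x y:I) : I := (fst x + fst y, snd x + snd y).
Definition ineg (x:I) : I := (- snd x, - fst x).
Definition isub (x y:I) : I := iadd x (ineg y).
Definition imul (x y:I) : I :=
  let a := fst x in let b := snd x in let c := fst y in let d := snd y in
  (fdn (zmin (zmin (a*c) (b*c)) (zmin (a*d) (b*d))),
   fup (zmax (zmax (a*c) (b*c)) (zmax (a*d) (b*d)))).
Definition icst (n:Z) (d:Z) : I := ((n*Sc)/d, - ((- (n*Sc))/d)).
Fixpoint pdn (y:Z) (n:nat) : Z := match n with O => Sc | S k => fdn (y * pdn y k) end.
Fixpoint pup (y:Z) (n:nat) : Z := match n with O => Sc | S k => fup (y * pup y k) end.
Fixpoint zfact (n:nat) : Z := match n with O => 1 | S k => Z.of_nat (S k) * zfact k end.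
Fixpoint zsum (f:nat -> Z) (n:nat) : Z := match n with O => f O | S k => zsum f k + f (S k) end.
Definition slow (yl yh:Z) (i:nat) : Z :=
  if Nat.even i then pdn yl (2*i+1) / zfact (2*i+1)
  else - (- ((- pup yh (2*i+1)) / zfact (2*i+1))).
Definition shigh (yl yh:Z) (i:nat) : Z :=
  if Nat.even i then - ((- pup yh (2*i+1)) / zfact (2*i+1))
  else - (pdn yl (2*i+1) / zfact (2*i+1)).
Definition sin_enc (N:nat) (yl yh:Z) : I :=
  (zsum (slow yl yh) (2*N+1), zsum (shigh yl yh) (2*(N+1))).
Definition plZ : Z := 13493034897.
Definition phZ : Z := 13493039193.
Definition full : I := (-Sc, Sc).
Definition sin_red (t3:Z) : I :=
  if Z.leb 0 t3 && Z.leb (2*t3) Sc then sin_enc 2 (fdn (t3*plZ)) (fup (t3*phZ)) else full.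
Definition sinpi_pos (th:Z) : I :=
  let n := Z.to_nat (Z.shiftr th (P+1)) in
  let t1 := th - 2 * Sc * Z.of_nat n in
  if Z.leb Sc t1 then
    let t2 := t1 - Sc in
    ineg (sin_red (if Z.leb Sc (2*t2) then Sc - t2 else t2))
  else sin_red (if Z.leb Sc (2*t1) then Sc - t1 else t1).
Definition sinpi_pt (th:Z) : I :=
  if Z.leb 0 th then sinpi_pos th else ineg (sinpi_pos (- th)).
Definition sinpi (x:I) : I :=
  let m := Z.shiftr (fst x + snd x) 1 in let r := snd x - m in
  let p := sinpi_pt m in let e := fup (phZ * r) in (fst p - e, snd p + e).
Definition cospi (x:I) : I := sinpi (iadd x (icst 1 2)).
Definition one : I := (Sc, Sc).
Definition aff (n0 d0 na da nb db:Z) (A B:I) : I :=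
  iadd (icst n0 d0) (iadd (imul (icst na da) A) (imul (icst nb db) B)).
Definition Fint (A B:I) : I :=
  let cb := cospi (aff 2 1 (-2) 1 0 1 A B) in
  let s1 := sinpi (aff (-1) 1 2 1 0 1 A B) in
  let cg := cospi (icst 2 5) in
  let s2 := sinpi (aff (-12) 5 4 1 1 1 A B) in
  let s3 := sinpi (aff 7 10 (-1) 1 (-1) 2 A B) in
  let cbg := cospi (aff 8 5 (-2) 1 0 1 A B) in
  let s4 := sinpi (aff 1 1 (-1) 1 0 1 A B) in
  let s5 := sinpi (aff (-7) 10 2 1 1 2 A B) in
  isub (imul (isub (imul (isub one cb) s1) (imul (isub one cg) s2)) s3)
       (imul (imul (isub one cbg) s4) s5).
Definition outside (A B:I) : bool := Z.ltb (45 * snd A + 15 * snd B) (21 * Sc).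
Fixpoint check (n:nat) (A B:I) : bool :=
  if outside A B then true else
  if Z.ltb (snd (Fint A B)) 0 then true else
  match n with O => false | S k =>
    if Z.leb (snd B - fst B) (snd A - fst A) then
      let m := Z.shiftr (fst A + snd A) 1 in check k (fst A, m) B && check k (m, snd A) B
    else let m := Z.shiftr (fst B + snd B) 1 in check k A (fst B, m) && check k A (m, snd B)
  end.
Definition A0 : I := (fst (icst 16 45), Sc).
Definition B0 : I := (0, snd (icst 1 3)).
Lemma check_ok : check 20 A0 B0 = true.
Proof. vm_compute. reflexivity. Qed.
Lemma pl_ok : (0 < fst (sin_enc 12 plZ plZ))%Z.
Proof. vm_compute. reflexivity. Qed.
Lemma ph_ok : (snd (sin_enc 12 phZ phZ) < 0)%Z.
Proof. vm_compute. reflexivity. Qed.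
Close Scope Z_scope.

Definition SR : R := IZR Sc.
Definition inI (i:I) (x:R) := IZR (fst i) <= x * SR <= IZR (snd i).

Lemma SR_pos : 0 < SR.
Proof. unfold SR. apply IZR_lt. reflexivity. Qed.


Lemma fdn_spec x : IZR (fdn x) * SR <= IZR x.
Proof.
  unfold fdn, SR. rewrite Z.shiftr_div_pow2 by (unfold P; lia).
  rewrite <- mult_IZR. apply IZR_le. rewrite Z.mul_comm. apply Z.mul_div_le. reflexivity.
Qed.

Lemma fup_spec x : IZR x <= IZR (fup x) * SR.
Proof.
  unfold fup, SR. rewrite Z.shiftr_div_pow2 by (unfold P; lia).
  rewrite <- mult_IZR. apply IZR_le.
  assert (H := Z.mul_div_le (- x) (2^P) ltac:(reflexivity)). fold Sc in *. lia.
Qed.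

Lemma fdn_nonneg x : (0 <= x)%Z -> (0 <= fdn x)%Z.
Proof. intro. unfold fdn. apply Z.shiftr_nonneg. assumption. Qed.

Lemma zmin_R a b : IZR (zmin a b) = Rmin (IZR a) (IZR b).
Proof.
  unfold zmin. destruct (Z.leb_spec a b).
  - rewrite Rmin_left; [reflexivity| apply IZR_le; lia].
  - rewrite Rmin_right; [reflexivity| apply IZR_le; lia].
Qed.

Lemma zmax_R a b : IZR (zmax a b) = Rmax (IZR a) (IZR b).
Proof.
  unfold zmax. destruct (Z.leb_spec a b).
  - rewrite Rmax_right; [reflexivity| apply IZR_le; lia].
  - rewrite Rmax_left; [reflexivity| apply IZR_le; lia].
Qed.

Lemma lin_bound a b X c : a <= X <= b ->
  Rmin (a*c) (b*c) <= X*c <= Rmax (a*c) (b*c).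
Proof.
  intros. unfold Rmin, Rmax.
  destruct (Rle_dec 0 c); repeat destruct Rle_dec; split; nra.
Qed.

Lemma mul_bound a b c d X Y : a <= X <= b -> c <= Y <= d ->
  Rmin (Rmin (a*c) (b*c)) (Rmin (a*d) (b*d)) <= X*Y <=
  Rmax (Rmax (a*c) (b*c)) (Rmax (a*d) (b*d)).
Proof.
  intros HX HY.
  destruct (lin_bound a b X c HX) as [H1 H2].
  destruct (lin_bound a b X d HX) as [H3 H4].
  destruct (lin_bound c d Y X HY) as [H5 H6].
  rewrite (Rmult_comm c X), (Rmult_comm d X), (Rmult_comm Y X) in *.
  revert H1 H2 H3 H4 H5 H6. unfold Rmin, Rmax.
  repeat destruct Rle_dec; intros; split; lra.
Qed.

Lemma iadd_sound A B x y : inI A x -> inI B y -> inI (iadd A B) (x + y).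
Proof. unfold inI, iadd; simpl; intros; rewrite !plus_IZR; lra. Qed.

Lemma ineg_sound A x : inI A x -> inI (ineg A) (- x).
Proof. unfold inI, ineg; simpl; intros; rewrite !opp_IZR; lra. Qed.

Lemma isub_sound A B x y : inI A x -> inI B y -> inI (isub A B) (x - y).
Proof. intros. apply iadd_sound; auto. apply ineg_sound; auto. Qed.

Lemma imul_sound A B x y : inI A x -> inI B y -> inI (imul A B) (x * y).
Proof.
  unfold inI, imul; simpl; intros HA HB.
  destruct (mul_bound _ _ _ _ _ _ HA HB) as [H1 H2].
  rewrite <- !mult_IZR, <- !zmin_R in H1. rewrite <- !mult_IZR, <- !zmax_R in H2.
  assert (E : x * SR * (y * SR) = (x*y*SR) * SR) by ring. rewrite E in H1, H2.
  pose proof SR_pos.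
  split.
  - apply Rmult_le_reg_r with SR; auto.
    eapply Rle_trans; [apply fdn_spec| exact H1].
  - apply Rmult_le_reg_r with SR; auto.
    eapply Rle_trans; [exact H2| apply fup_spec].
Qed.

Lemma icst_sound n d : (0 < d)%Z -> inI (icst n d) (IZR n / IZR d).
Proof.
  intro Hd. unfold inI, icst; simpl.
  assert (Hd' : 0 < IZR d) by (apply IZR_lt; lia).
  pose proof (Z.mul_div_le (n*Sc) d Hd) as E1.
  pose proof (Z.mul_div_le (-(n*Sc)) d Hd) as E2.
  unfold SR. split.
  - apply Rmult_le_reg_r with (IZR d); auto.
    replace (IZR n / IZR d * IZR Sc * IZR d) with (IZR (n*Sc)) by (rewrite mult_IZR; field; lra).
    rewrite <- mult_IZR. apply IZR_le. lia.
  - apply Rmult_le_reg_r with (IZR d); auto.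
    replace (IZR n / IZR d * IZR Sc * IZR d) with (IZR (n*Sc)) by (rewrite mult_IZR; field; lra).
    rewrite <- mult_IZR. apply IZR_le. lia.
Qed.

Lemma aff_sound n0 d0 na da nb db A B a b :
  (0 < d0)%Z -> (0 < da)%Z -> (0 < db)%Z -> inI A a -> inI B b ->
  inI (aff n0 d0 na da nb db A B) (IZR n0 / IZR d0 + (IZR na / IZR da * a + IZR nb / IZR db * b)).
Proof.
  intros. unfold aff. apply iadd_sound. apply icst_sound; auto.
  apply iadd_sound; apply imul_sound; auto; apply icst_sound; auto.
Qed.

Lemma zsum_R f n : IZR (zsum f n) = sum_f_R0 (fun i => IZR (f i)) n.
Proof. induction n; simpl; [reflexivity| rewrite plus_IZR, IHn; reflexivity]. Qed.

Lemma zfact_R k : IZR (zfact k) = INR (fact k).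
Proof.
  induction k; [reflexivity|].
  change (zfact (S k)) with (Z.of_nat (S k) * zfact k)%Z.
  rewrite mult_IZR, IHk. change (fact (S k)) with (S k * fact k)%nat.
  rewrite mult_INR, (INR_IZR_INZ (S k)). reflexivity.
Qed.

Lemma zfact_pos k : (0 < zfact k)%Z.
Proof. induction k; [simpl; lia|]. change (zfact (S k)) with (Z.of_nat (S k) * zfact k)%Z. lia. Qed.

Lemma pow_sign i : (-1)^i = if Nat.even i then 1 else -1.
Proof.
  induction i; [reflexivity|].
  rewrite Nat.even_succ, <- Nat.negb_even. simpl pow. rewrite IHi.
  destruct (Nat.even i); simpl; ring.
Qed.

Lemma pdn_sound yl y k : (0 <= yl)%Z -> IZR yl <= y * SR ->
  (0 <= pdn yl k)%Z /\ IZR (pdn yl k) <= y ^ k * SR.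
Proof.
  intros H0 H1. pose proof SR_pos.
  induction k as [|k [IH1 IH2]]; simpl pdn.
  - split; [unfold Sc; simpl; lia| unfold SR; simpl; lra].
  - split. apply fdn_nonneg. lia.
    apply Rmult_le_reg_r with SR; auto.
    eapply Rle_trans; [apply fdn_spec|]. rewrite mult_IZR.
    assert (0 <= IZR yl) by (apply IZR_le; lia).
    assert (0 <= IZR (pdn yl k)) by (apply IZR_le; lia).
    replace (y ^ S k * SR * SR) with ((y*SR) * (y^k*SR)) by (simpl; ring).
    apply Rmult_le_compat; auto.
Qed.

Lemma pup_sound yh y k : 0 <= y -> y * SR <= IZR yh ->
  y ^ k * SR <= IZR (pup yh k).
Proof.
  intros H0 H1. pose proof SR_pos.
  induction k as [|k IH]; simpl pup.
  - unfold SR; simpl; lra.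
  - apply Rmult_le_reg_r with SR; auto.
    eapply Rle_trans; [|apply fup_spec]. rewrite mult_IZR.
    replace (y ^ S k * SR * SR) with ((y*SR) * (y^k*SR)) by (simpl; ring).
    assert (0 <= y ^ k) by (apply pow_le; auto).
    apply Rmult_le_compat; auto; apply Rmult_le_pos; lra.
Qed.

Lemma div_dn p F : (0 < F)%Z -> IZR (p / F) <= IZR p / IZR F.
Proof.
  intro H. assert (0 < IZR F) by (apply IZR_lt; lia).
  apply Rmult_le_reg_r with (IZR F); auto.
  replace (IZR p / IZR F * IZR F) with (IZR p) by (field; lra).
  rewrite <- mult_IZR. apply IZR_le. rewrite Z.mul_comm. apply Z.mul_div_le. auto.
Qed.

Lemma div_up p F : (0 < F)%Z -> IZR p / IZR F <= IZR (- ((-p) / F)).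
Proof.
  intro H. pose proof (div_dn (-p) F H). rewrite opp_IZR.
  rewrite (opp_IZR p) in H0. unfold Rdiv in *. lra.
Qed.

Lemma slow_sound yl yh y i : (0 <= yl)%Z -> IZR yl <= y * SR -> y * SR <= IZR yh ->
  IZR (slow yl yh i) <= sin_term y i * SR.
Proof.
  intros H0 H1 H2. pose proof SR_pos.
  assert (Hy : 0 <= y) by (assert (0 <= IZR yl) by (apply IZR_le; lia); nra).
  pose proof (zfact_pos (2*i+1)) as Fp.
  assert (FR : 0 < INR (fact (2*i+1))) by (rewrite <- zfact_R; apply IZR_lt; lia).
  unfold slow, sin_term. rewrite pow_sign.
  destruct (Nat.even i).
  - eapply Rle_trans; [apply div_dn; auto|]. rewrite zfact_R.
    destruct (pdn_sound yl y (2*i+1) H0 H1).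
    apply Rle_trans with (y ^ (2*i+1) * SR / INR (fact (2*i+1))).
    + unfold Rdiv; apply Rmult_le_compat_r; auto. left; apply Rinv_0_lt_compat; auto.
    + right; field; lra.
  - pose proof (div_up (pup yh (2*i+1)) _ Fp).
    rewrite opp_IZR. rewrite zfact_R in H3.
    pose proof (pup_sound yh y (2*i+1) Hy H2).
    apply Rle_trans with (- (y ^ (2*i+1) * SR / INR (fact (2*i+1)))).
    + apply Ropp_le_contravar. eapply Rle_trans; [|exact H3].
      unfold Rdiv; apply Rmult_le_compat_r; auto. left; apply Rinv_0_lt_compat; auto.
    + right; field; lra.
Qed.

Lemma shigh_sound yl yh y i : (0 <= yl)%Z -> IZR yl <= y * SR -> y * SR <= IZR yh ->
  sin_term y i * SR <= IZR (shigh yl yh i).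
Proof.
  intros H0 H1 H2. pose proof SR_pos.
  assert (Hy : 0 <= y) by (assert (0 <= IZR yl) by (apply IZR_le; lia); nra).
  pose proof (zfact_pos (2*i+1)) as Fp.
  assert (FR : 0 < INR (fact (2*i+1))) by (rewrite <- zfact_R; apply IZR_lt; lia).
  unfold shigh, sin_term. rewrite pow_sign.
  destruct (Nat.even i).
  - pose proof (div_up (pup yh (2*i+1)) _ Fp).
    rewrite zfact_R in H3.
    pose proof (pup_sound yh y (2*i+1) Hy H2).
    eapply Rle_trans; [|exact H3].
    apply Rle_trans with (y ^ (2*i+1) * SR / INR (fact (2*i+1))).
    + right; field; lra.
    + unfold Rdiv; apply Rmult_le_compat_r; auto. left; apply Rinv_0_lt_compat; auto.
  - rewrite opp_IZR. 
    pose proof (div_dn (pdn yl (2*i+1)) _ Fp). rewrite zfact_R in H3.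
    destruct (pdn_sound yl y (2*i+1) H0 H1).
    apply Rle_trans with (- (y ^ (2*i+1) * SR / INR (fact (2*i+1)))).
    + right; field; lra.
    + apply Ropp_le_contravar. eapply Rle_trans; [exact H3|].
      unfold Rdiv; apply Rmult_le_compat_r; auto. left; apply Rinv_0_lt_compat; auto.
Qed.

Lemma sin_enc_sound N yl yh y : (0 <= yl)%Z -> IZR yl <= y * SR -> y * SR <= IZR yh ->
  y <= 4 -> inI (sin_enc N yl yh) (sin y).
Proof.
  intros H0 H1 H2 H4. pose proof SR_pos.
  assert (Hy : 0 <= y) by (assert (0 <= IZR yl) by (apply IZR_le; lia); nra).
  destruct (pre_sin_bound y N Hy H4) as [L U].
  unfold inI, sin_enc; simpl fst; simpl snd. rewrite !zsum_R.
  split.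
  - apply Rle_trans with (sin_approx y (2*N+1) * SR); [|apply Rmult_le_compat_r; lra].
    unfold sin_approx. rewrite Rmult_comm, scal_sum. apply sum_Rle.
    intros; apply slow_sound; auto.
  - apply Rle_trans with (sin_approx y (2*(N+1)) * SR); [apply Rmult_le_compat_r; lra|].
    unfold sin_approx. rewrite Rmult_comm, scal_sum. apply sum_Rle.
    intros; apply shigh_sound; auto.
Qed.

Lemma PI_gt3 : 3 < PI.
Proof. pose proof PI2_3_2. lra. Qed.

Lemma PI_lo : IZR plZ <= PI * SR.
Proof.
  pose proof SR_pos. pose proof PI_gt3.
  destruct (Rle_or_lt (IZR plZ) (PI*SR)) as [Hc|Hc]; auto. exfalso.
  set (p := IZR plZ / SR).
  assert (Ep : p * SR = IZR plZ) by (unfold p; field; lra).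
  assert (Hp4 : p <= 4).
  { apply Rmult_le_reg_r with SR; auto. rewrite Ep. unfold SR.
    rewrite <- mult_IZR. apply IZR_le. vm_compute. discriminate. }
  assert (Hpi : PI <= p) by (apply Rmult_le_reg_r with SR; lra).
  assert (Hs : sin p <= 0) by (apply sin_le_0; lra).
  assert (Hz : (0 <= plZ)%Z) by (vm_compute; discriminate).
  destruct (sin_enc_sound 12 plZ plZ p Hz (Req_le _ _ (eq_sym Ep)) (Req_le _ _ Ep) Hp4) as [L _].
  pose proof pl_ok as K. apply IZR_lt in K. nra.
Qed.

Lemma PI_hi : PI * SR <= IZR phZ.
Proof.
  pose proof SR_pos. pose proof PI_gt3.
  destruct (Rle_or_lt (PI*SR) (IZR phZ)) as [Hc|Hc]; auto. exfalso.
  set (p := IZR phZ / SR).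
  assert (Ep : p * SR = IZR phZ) by (unfold p; field; lra).
  assert (Hz : (0 <= phZ)%Z) by (vm_compute; discriminate).
  assert (Hp0 : 0 <= p).
  { apply Rmult_le_reg_r with SR; auto. rewrite Ep, Rmult_0_l. apply IZR_le. exact Hz. }
  assert (Hpi : p <= PI) by (apply Rmult_le_reg_r with SR; lra).
  assert (Hs : 0 <= sin p) by (apply sin_ge_0; lra).
  destruct (sin_enc_sound 12 phZ phZ p Hz (Req_le _ _ (eq_sym Ep)) (Req_le _ _ Ep) ltac:(pose proof PI_4; lra)) as [_ U].
  pose proof ph_ok as K. apply IZR_lt in K. nra.
Qed.

Lemma sin_abs_le z : Rabs (sin z) <= Rabs z.
Proof.
  assert (K : forall z, 0 <= z -> Rabs (sin z) <= z).
  { clear z. intros z Hz. pose proof (SIN_bound z). pose proof PI_gt3.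
    destruct (Rle_or_lt 1 z).
    - apply Rabs_le. lra.
    - destruct (Req_dec z 0) as [->|Hn]; [rewrite sin_0, Rabs_R0; lra|].
      assert (sin z < z) by (apply sin_lt_x; lra).
      assert (0 <= sin z) by (apply sin_ge_0; lra).
      rewrite Rabs_right; lra. }
  destruct (Rle_or_lt 0 z).
  - rewrite (Rabs_right z) by lra. auto.
  - rewrite <- (Ropp_involutive z), sin_neg, Rabs_Ropp, Rabs_Ropp.
    rewrite (Rabs_right (-z)) by lra. apply K. lra.
Qed.

Lemma sin_lip a b : Rabs (sin a - sin b) <= Rabs (a - b).
Proof.
  rewrite form4, !Rabs_mult.
  pose proof (COS_bound ((a+b)/2)). pose proof (sin_abs_le ((a-b)/2)).
  assert (Rabs (cos ((a+b)/2)) <= 1) by (apply Rabs_le; lra).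
  replace ((a-b)/2) with ((a-b)*/2) in H0 by reflexivity.
  rewrite Rabs_mult, (Rabs_right (/2)) in H0 by lra.
  rewrite Rabs_right by lra.
  replace ((a-b)/2) with ((a-b)*/2) by reflexivity.
  pose proof (Rabs_pos (sin ((a - b) * / 2))). pose proof (Rabs_pos (cos ((a + b) / 2))).
  nra.
Qed.

Lemma sin_red_sound t3 : inI (sin_red t3) (sin (PI * (IZR t3 / SR))).
Proof.
  pose proof SR_pos. pose proof PI_gt3. pose proof PI_lo. pose proof PI_hi.
  unfold sin_red.
  destruct (Z.leb_spec 0 t3) as [Ha|Ha]; [destruct (Z.leb_spec (2*t3) Sc) as [Hb|Hb]|]; simpl andb.
  - apply IZR_le in Ha. apply IZR_le in Hb. rewrite mult_IZR in Hb. fold SR in Hb.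
    apply sin_enc_sound.
    + apply fdn_nonneg. apply Z.mul_nonneg_nonneg. apply le_IZR; auto. vm_compute; discriminate.
    + apply Rmult_le_reg_r with SR; auto.
      eapply Rle_trans; [apply fdn_spec|]. rewrite mult_IZR.
      replace (PI * (IZR t3 / SR) * SR * SR) with (IZR t3 * (PI * SR)) by (field; lra).
      apply Rmult_le_compat_l; auto.
    + apply Rmult_le_reg_r with SR; auto.
      eapply Rle_trans; [|apply fup_spec]. rewrite mult_IZR.
      replace (PI * (IZR t3 / SR) * SR * SR) with (IZR t3 * (PI * SR)) by (field; lra).
      apply Rmult_le_compat_l; auto.
    + pose proof PI_4. apply Rle_trans with (PI * (1/2)); [|lra].
      apply Rmult_le_compat_l; [lra|].
      apply Rmult_le_reg_r with SR; auto. replace (IZR t3 / SR * SR) with (IZR t3) by (field; lra). lra.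
  - unfold inI, full; cbn [fst snd]. fold SR. pose proof (SIN_bound (PI * (IZR t3 / SR))). replace (IZR (- Sc)) with (- SR) by (unfold SR; rewrite opp_IZR; reflexivity). nra.
  - unfold inI, full; cbn [fst snd]. fold SR. pose proof (SIN_bound (PI * (IZR t3 / SR))). replace (IZR (- Sc)) with (- SR) by (unfold SR; rewrite opp_IZR; reflexivity). nra.
Qed.

Lemma sin_red_sym t : inI (sin_red (if Z.leb Sc (2*t) then Sc - t else t)) (sin (PI * (IZR t / SR))).
Proof.
  pose proof SR_pos.
  destruct (Z.leb Sc (2*t)); [|apply sin_red_sound].
  replace (PI * (IZR t / SR)) with (PI - PI * (IZR (Sc - t) / SR)).
  - rewrite sin_PI_x. apply sin_red_sound.
  - rewrite minus_IZR. fold SR. field. lra.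
Qed.

Lemma sinpi_pos_sound th : inI (sinpi_pos th) (sin (PI * (IZR th / SR))).
Proof.
  pose proof SR_pos.
  unfold sinpi_pos. cbv zeta.
  set (n := Z.to_nat (Z.shiftr th (P + 1))).
  set (t1 := (th - 2 * Sc * Z.of_nat n)%Z).
  assert (E : PI * (IZR th / SR) = PI * (IZR t1 / SR) + 2 * INR n * PI).
  { unfold t1. rewrite minus_IZR, !mult_IZR, INR_IZR_INZ. fold SR. field. lra. }
  rewrite E, sin_period.
  destruct (Z.leb Sc t1).
  - replace (PI * (IZR t1 / SR)) with (PI * (IZR (t1 - Sc) / SR) + PI)
      by (rewrite minus_IZR; fold SR; field; lra).
    rewrite neg_sin. apply ineg_sound. apply sin_red_sym.
  - apply sin_red_sym.
Qed.

Lemma sinpi_pt_sound th : inI (sinpi_pt th) (sin (PI * (IZR th / SR))).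
Proof.
  unfold sinpi_pt. destruct (Z.leb 0 th); [apply sinpi_pos_sound|].
  replace (PI * (IZR th / SR)) with (- (PI * (IZR (- th) / SR))) by (rewrite opp_IZR; field; pose proof SR_pos; lra).
  rewrite sin_neg. apply ineg_sound. apply sinpi_pos_sound.
Qed.

Lemma sinpi_sound A x : inI A x -> inI (sinpi A) (sin (PI * x)).
Proof.
  intros [HA1 HA2]. pose proof SR_pos. pose proof PI_gt3. pose proof PI_hi.
  unfold sinpi. cbv zeta.
  set (m := Z.shiftr (fst A + snd A) 1).
  assert (Hm : (2 * m <= fst A + snd A)%Z).
  { unfold m. rewrite Z.shiftr_div_pow2 by lia. pose proof (Z.mul_div_le (fst A + snd A) (2^1) ltac:(reflexivity)). simpl in *. lia. }
  apply IZR_le in Hm. rewrite mult_IZR, plus_IZR in Hm.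
  set (r := (snd A - m)%Z).
  assert (Hr : Rabs (x * SR - IZR m) <= IZR r) by (unfold r; rewrite minus_IZR; apply Rabs_le; lra).
  assert (Hr0 : 0 <= IZR r) by (eapply Rle_trans; [apply Rabs_pos| exact Hr]).
  assert (Hlip := sin_lip (PI * x) (PI * (IZR m / SR))).
  assert (Hd : Rabs (PI * x - PI * (IZR m / SR)) * SR <= PI * IZR r).
  { replace (PI * x - PI * (IZR m / SR)) with ((PI * (x * SR - IZR m)) * / SR) by (field; lra).
    rewrite Rabs_mult, Rabs_inv, Rabs_mult, (Rabs_right PI), (Rabs_right SR) by lra.
    replace (PI * Rabs (x * SR - IZR m) * / SR * SR) with (PI * Rabs (x * SR - IZR m)) by (field; lra).
    apply Rmult_le_compat_l; lra. }
  set (e := fup (phZ * r)).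
  assert (He : PI * IZR r <= IZR e).
  { apply Rmult_le_reg_r with SR; auto. eapply Rle_trans; [|apply fup_spec].
    rewrite mult_IZR. replace (PI * IZR r * SR) with ((PI * SR) * IZR r) by ring.
    apply Rmult_le_compat_r; auto. }
  destruct (sinpi_pt_sound m) as [P1 P2].
  assert (Hl2 : Rabs (sin (PI * x) - sin (PI * (IZR m / SR))) * SR <= IZR e).
  { eapply Rle_trans; [|exact He]. eapply Rle_trans; [|exact Hd].
    apply Rmult_le_compat_r; lra. }
  unfold inI. cbn [fst snd]. rewrite minus_IZR, plus_IZR.
  set (d := sin (PI * x) - sin (PI * (IZR m / SR))) in Hl2.
  pose proof (Rle_abs d) as Ad1. pose proof (Rle_abs (-d)) as Ad2. rewrite Rabs_Ropp in Ad2.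
  assert (d * SR <= IZR e) by nra. assert (- d * SR <= IZR e) by nra.
  unfold d in *. split; nra.
Qed.

Lemma cospi_sound A x : inI A x -> inI (cospi A) (cos (PI * x)).
Proof.
  intro H. unfold cospi. rewrite cos_sin.
  replace (PI / 2 + PI * x) with (PI * (x + IZR 1 / IZR 2)) by (simpl; field).
  apply sinpi_sound. apply iadd_sound; auto. apply icst_sound. lia.
Qed.

Definition Freal (a b : R) : R :=
  a4b_lhs (2 * PI - 2 * (a * PI)) (2 * PI - 2 * (a * PI)) (2 * PI / 5) (a * PI)
          (3 * (a * PI) - 7 * PI / 5 + b * PI).

Lemma one_sound : inI one 1.
Proof. unfold inI, one; cbn [fst snd]. fold SR. lra. Qed.

Lemma Fint_sound A B a b : inI A a -> inI B b -> inI (Fint A B) (Freal a b).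
Proof.
  intros HA HB. unfold Freal, a4b_lhs, Fint. cbv zeta.
  assert (Hcb : inI (cospi (aff 2 1 (-2) 1 0 1 A B)) (cos (2 * PI - 2 * (a * PI)))).
  { replace (2 * PI - 2 * (a * PI)) with (PI * (IZR 2 / IZR 1 + (IZR (-2) / IZR 1 * a + IZR 0 / IZR 1 * b))) by field.
    apply cospi_sound, aff_sound; auto; lia. }
  assert (Hs1 : inI (sinpi (aff (-1) 1 2 1 0 1 A B)) (sin (a * PI - (2 * PI - 2 * (a * PI)) / 2))).
  { replace (a * PI - (2 * PI - 2 * (a * PI)) / 2) with (PI * (IZR (-1) / IZR 1 + (IZR 2 / IZR 1 * a + IZR 0 / IZR 1 * b))) by field.
    apply sinpi_sound, aff_sound; auto; lia. }
  assert (Hcg : inI (cospi (icst 2 5)) (cos (2 * PI / 5))).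
  { replace (2 * PI / 5) with (PI * (IZR 2 / IZR 5)) by field.
    apply cospi_sound, icst_sound; lia. }
  assert (Hs2 : inI (sinpi (aff (-12) 5 4 1 1 1 A B)) (sin (3 * (a * PI) - 7 * PI / 5 + b * PI - (2 * PI - 2 * (a * PI)) / 2))).
  { replace (3 * (a * PI) - 7 * PI / 5 + b * PI - (2 * PI - 2 * (a * PI)) / 2) with (PI * (IZR (-12) / IZR 5 + (IZR 4 / IZR 1 * a + IZR 1 / IZR 1 * b))) by field.
    apply sinpi_sound, aff_sound; auto; lia. }
  assert (Hs3 : inI (sinpi (aff 7 10 (-1) 1 (-1) 2 A B)) (sin ((a * PI - (3 * (a * PI) - 7 * PI / 5 + b * PI)) / 2))).
  { replace ((a * PI - (3 * (a * PI) - 7 * PI / 5 + b * PI)) / 2) with (PI * (IZR 7 / IZR 10 + (IZR (-1) / IZR 1 * a + IZR (-1) / IZR 2 * b))) by field.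
    apply sinpi_sound, aff_sound; auto; lia. }
  assert (Hcbg : inI (cospi (aff 8 5 (-2) 1 0 1 A B)) (cos (2 * PI - 2 * (a * PI) - 2 * PI / 5))).
  { replace (2 * PI - 2 * (a * PI) - 2 * PI / 5) with (PI * (IZR 8 / IZR 5 + (IZR (-2) / IZR 1 * a + IZR 0 / IZR 1 * b))) by field.
    apply cospi_sound, aff_sound; auto; lia. }
  assert (Hs4 : inI (sinpi (aff 1 1 (-1) 1 0 1 A B)) (sin ((2 * PI - 2 * (a * PI)) / 2))).
  { replace ((2 * PI - 2 * (a * PI)) / 2) with (PI * (IZR 1 / IZR 1 + (IZR (-1) / IZR 1 * a + IZR 0 / IZR 1 * b))) by field.
    apply sinpi_sound, aff_sound; auto; lia. }
  assert (Hs5 : inI (sinpi (aff (-7) 10 2 1 1 2 A B)) (sin ((a * PI + (3 * (a * PI) - 7 * PI / 5 + b * PI)) / 2))).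
  { replace ((a * PI + (3 * (a * PI) - 7 * PI / 5 + b * PI)) / 2) with (PI * (IZR (-7) / IZR 10 + (IZR 2 / IZR 1 * a + IZR 1 / IZR 2 * b))) by field.
    apply sinpi_sound, aff_sound; auto; lia. }
  pose proof one_sound.
  apply isub_sound; apply imul_sound.
  - apply isub_sound; apply imul_sound; auto; apply isub_sound; auto.
  - auto.
  - apply imul_sound; auto. apply isub_sound; auto.
  - auto.
Qed.

Lemma check_eq0 A B : check 0 A B =
  if outside A B then true else if Z.ltb (snd (Fint A B)) 0 then true else false.
Proof. reflexivity. Qed.

Lemma check_eqS n A B : check (S n) A B =
  if outside A B then true else if Z.ltb (snd (Fint A B)) 0 then true else
    if Z.leb (snd B - fst B) (snd A - fst A) then
      let m := Z.shiftr (fst A + snd A) 1 in check n (fst A, m) B && check n (m, snd A) B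
    else let m := Z.shiftr (fst B + snd B) 1 in check n A (fst B, m) && check n A (m, snd B).
Proof. reflexivity. Qed.

Lemma check_sound n : forall A B, check n A B = true ->
  forall a b, inI A a -> inI B b -> 7/15 - b/3 < a -> Freal a b < 0.
Proof.
  pose proof SR_pos.
  induction n as [|n IH]; intros A B Hc a b HA HB Hab; [rewrite check_eq0 in Hc|rewrite check_eqS in Hc];
  (destruct (outside A B) eqn:Ho;
   [ exfalso; unfold outside in Ho; apply Z.ltb_lt in Ho; apply IZR_lt in Ho;
     rewrite plus_IZR, !mult_IZR in Ho; fold SR in Ho; destruct HA, HB; nra
   | ]);
  (destruct (Z.ltb (snd (Fint A B)) 0) eqn:Hf;
   [ apply Z.ltb_lt in Hf; apply IZR_lt in Hf; destruct (Fint_sound A B a b HA HB); nra | ]).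
  - discriminate.
  - destruct (Z.leb (snd B - fst B) (snd A - fst A)).
    + apply andb_true_iff in Hc. destruct Hc as [H1 H2].
      set (m := Z.shiftr (fst A + snd A) 1) in *.
      destruct HA as [HA1 HA2].
      destruct (Rle_or_lt (a * SR) (IZR m)).
      * apply (IH _ _ H1); auto. unfold inI; cbn [fst snd]; lra.
      * apply (IH _ _ H2); auto. unfold inI; cbn [fst snd]; lra.
    + apply andb_true_iff in Hc. destruct Hc as [H1 H2].
      set (m := Z.shiftr (fst B + snd B) 1) in *.
      destruct HB as [HB1 HB2].
      destruct (Rle_or_lt (b * SR) (IZR m)).
      * apply (IH _ _ H1); auto. unfold inI; cbn [fst snd]; lra.
      * apply (IH _ _ H2); auto. unfold inI; cbn [fst snd]; lra.
Qed.

Lemma F_neg a b : 16/45 <= a <= 1 -> 0 <= b <= 1/3 -> 7/15 - b/3 < a -> Freal a b < 0.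
Proof.
  intros Ha Hb Hab. pose proof SR_pos.
  apply (check_sound 20 A0 B0 check_ok); auto.
  - unfold inI, A0; cbn [fst snd]. fold SR.
    destruct (icst_sound 16 45 ltac:(lia)) as [L _].
    split; [eapply Rle_trans; [exact L|]|]; nra.
  - unfold inI, B0; cbn [fst snd].
    destruct (icst_sound 1 3 ltac:(lia)) as [_ U].
    split; [nra|eapply Rle_trans; [|exact U]]; nra.
Qed.


Theorem mainTheorem5 :
  ~ (exists (f : nat) (q : Q),
       Nat.Even f /\ (12 <= f)%nat /\
       let delta := Q2R q * PI in
       let alpha := 2 * PI - 2 * delta in
       let beta := 2 * PI - 2 * delta in
       let gamma := 2 * PI / 5 in
       let epsilon := 3 * delta - 7 * PI / 5 + 4 * PI / INR f in
       7 * PI / 15 - 4 * PI / (3 * INR f) < delta < PI /\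
       a4b_lhs alpha beta gamma delta epsilon = 0).
Proof.
  intros [f [q [_ [Hf H]]]]. cbv zeta in H. destruct H as [[H1 H2] H3].
  pose proof PI_gt3.
  assert (Hf12 : 12 <= INR f).
  { replace 12 with (INR 12) by (simpl; ring). apply le_INR; auto. }
  set (a := Q2R q) in *. set (b := 4 / INR f).
  assert (Eb : 4 * PI / INR f = b * PI) by (unfold b; field; lra).
  rewrite Eb in H3.
  assert (Eb3 : 4 * PI / (3 * INR f) = b / 3 * PI) by (unfold b; field; lra).
  rewrite Eb3 in H1.
  assert (Hb : 0 <= b <= 1/3).
  { unfold b. split.
    - apply Rmult_le_pos; [lra| left; apply Rinv_0_lt_compat; lra].
    - apply Rmult_le_reg_r with (INR f); [lra|].
      replace (4 / INR f * INR f) with 4 by (field; lra). lra. }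
  assert (Hab : 7/15 - b/3 < a).
  { apply Rmult_lt_reg_r with PI; [lra|]. lra. }
  assert (Ha1 : a <= 1).
  { left. apply Rmult_lt_reg_r with PI; [lra|]. lra. }
  assert (Fn : Freal a b < 0) by (apply F_neg; lra).
  unfold Freal in Fn. lra.
Qed.
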